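(* Let $L>0$, $N\in\mathbb N$, and let $\rho^N_L(t)$ be the deterministic particle approximation at a time $t$ (at which it is well defined), constructed from $\rho_{0,L}$ with $\int_{\mathbb T_L}\rho_{0,L}(x)\,dx=c_L$. Then $$\|\phi(\rho^N_L(t))\|_{L^\infty(\mathbb T_L)}\le\Big(\phi\Big(\frac{c_L}{L}\Big)+1\Big)+N\sum_{k=0}^{N-1}|\phi(\rho_{k+1}(t))-\phi(\rho_k(t))|^2.$$
   Context: $\phi:[0,\infty)\to[0,\infty)$ is a continuous strictly increasing function with $\phi(0)=0$ (in the paper $\phi(\rho)=\rho W'(\rho)-W(\rho)$ with further structural assumptions). $K:\mathbb R\to\mathbb R$ is even, continuous, $C^2$ away from $0$, with $K,K'$ bounded. $\mathbb T_L=\mathbb R/L\mathbb Z\cong[-L/2,L/2)$. Deterministic particle approximation: given $\rho_{0,L}\in L^\infty(\mathbb T_L)$, $\rho_{0,L}\ge0$, $c_L=\int_{\mathbb T_L}\rho_{0,L}\le1$, set $x_0=-L/2$, $x_k=\sup\{x:\int_{x_{k-1}}^x\rho_{0,L}<c_L/N\}$, $k=1,\dots,N$; particles $x_k(t)$ (indices mod $N$) solve $\dot x_k=-\frac{c_L}{N}\sum_{j\ne k}K'(x_k-x_j)-\frac{N}{c_L}[\phi(\rho_k)-\phi(\rho_{k-1})]$, $x_k(0)=x_k$, with $\rho_k(t)=\frac{c_L}{N(x_{k+1}(t)-x_k(t))}$, and $\rho^N_L(t,x)=\sum_{k=0}^{N-1}\rho_k(t)\chi_{[x_k(t),x_{k+1}(t))}(x)$;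 well defined at $t$ if $x_0(s)<\dots<x_{N-1}(s)$ for $s\in[0,t]$, in which case $\sum_{k=0}^{N-1}(x_{k+1}(t)-x_k(t))=L$. *)

(* Defs.v *)
From HB Require Import structures.
From mathcomp Require Import all_boot all_order all_algebra.
From mathcomp Require Import all_classical all_reals all_analysis ess_sup_inf.
Set Implicit Arguments. Unset Strict Implicit. Unset Printing Implicit Defensive.
Import Order.TTheory GRing.Theory Num.Theory.
Import numFieldNormedType.Exports.
Local Open Scope classical_set_scope.
Local Open Scope ring_scope.

Section Defs.
Variable R : realType.

(* Lifted positions: x_{k + mN} := x_k + m L  (indices mod N, x_N = x_0 + L). *)
Definition xext (N : nat) (L : R) (x : nat -> R) (k : nat) : R :=
  x (k %% N)%N + L * (k %/ N)%:R.

Definition rhok (c : R) (N : nat) (L : R) (x : nat -> R) (k : nat) : R :=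
  c / (N%:R * (xext N L x (k %% N).+1 - xext N L x (k %% N)%N)).

Definition rep (L x0 y : R) : R := y - L * (Num.floor ((y - x0) / L))%:~R.

Definition rhoNL (c : R) (N : nat) (L : R) (x : nat -> R) (y : R) : R :=
  let y' := rep L (x 0%N) y in
  \sum_(k < N) rhok c N L x k *
     (if (xext N L x k <= y') && (y' < xext N L x k.+1) then 1 else 0).

Lemma measurable_torus (L : R) :
  measurable (`[- (L / 2), L / 2[%classic : set R).
Proof. exact: measurable_itv. Qed.

(* || f ||_{L^oo(T_L)}, T_L identified with [-L/2, L/2) *)
Definition LinfT (L : R) (f : R -> R) : \bar R :=
  ess_sup (mrestr lebesgue_measure (measurable_torus L)) (fun y => (`|f y|)%:E).

Fixpoint init_pos (rho0 : R -> R) (c : R) (N : nat) (L : R) (k : nat) : R :=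
  match k with
  | 0%N => - (L / 2)
  | k'.+1 => let a := init_pos rho0 c N L k' in
      sup [set z : R | a <= z /\
        (\int[lebesgue_measure]_(y in `[a, z]) (rho0 y)%:E < (c / N%:R)%:E)%E]
  end.

Definition velocity (dK phi : R -> R) (c : R) (N : nat) (L : R)
  (x : nat -> R -> R) (k : nat) (s : R) : R :=
  let xs := fun j => x j s in
  - (c / N%:R) * (\sum_(j < N | j != k :> nat) dK (xs k - xs j))
  - (N%:R / c) * (phi (rhok c N L xs k) - phi (rhok c N L xs (k + N).-1)).

End Defs.

(* Main.v *)
Require Import Defs.
From HB Require Import structures.
From mathcomp Require Import all_boot all_order all_algebra.
From mathcomp Require Import all_classical all_reals all_analysis ess_sup_inf.
From mathcomp Require Import ring lra.
Import Order.TTheory GRing.Theory Num.Theory.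
Import numFieldNormedType.Exports.
Local Open Scope classical_set_scope.
Local Open Scope ring_scope.

Lemma xext_small (R : realType) N L (xs : nat -> R) k :
  (k < N)%N -> xext N L xs k = xs k.
Proof. by move=> hk; rewrite /xext modn_small // divn_small // mulr0 addr0. Qed.

Lemma xext_N (R : realType) N L (xs : nat -> R) :
  (0 < N)%N -> xext N L xs N = xs 0%N + L.
Proof. by move=> hN; rewrite /xext modnn divnn hN mulr1. Qed.

Lemma xext_step {R : realType} {N L} {xs : nat -> R} :
  (0 < N)%N ->
  (forall k, (k.+1 < N)%N -> xs k < xs k.+1) ->
  xs N.-1 < xs 0%N + L ->
  forall k, (k < N)%N -> xext N L xs k < xext N L xs k.+1.
Proof.
move=> hN hinc hlast k hk; rewrite xext_small //.
case: (ltnP k.+1 N) => hk1; first by rewrite xext_small //; apply: hinc.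
have hkN : k.+1 = N by apply/eqP; rewrite eqn_leq hk1 hk.
by rewrite hkN xext_N //; move: hlast; rewrite -hkN.
Qed.

Lemma xext_mono {R : realType} {N L} {xs : nat -> R} :
  (forall k, (k < N)%N -> xext N L xs k < xext N L xs k.+1) ->
  forall d a, (a + d <= N)%N -> xext N L xs a <= xext N L xs (a + d).
Proof.
move=> hs; elim=> [|d IH] a had; first by rewrite addn0.
apply: (le_trans (IH a _)); first by apply: leq_trans had; rewrite leq_add2l.
rewrite addnS; apply/ltW/hs; by rewrite -addnS.
Qed.

Theorem lemma4p5 (R : realType) (phi K dK ddK : R -> R) (L : R) (N : nat)
  (rho0 : R -> R) (c : R) (x : nat -> R -> R) (t : R) :
  (* phi : [0,oo) -> [0,oo) continuous, strictly increasing, phi 0 = 0 *)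
  {within `[0, +oo[, continuous phi} ->
  {in `[0, +oo[ &, {homo phi : a b / a < b}} ->
  (forall r, 0 <= r -> 0 <= phi r) ->
  phi 0 = 0 ->
  (* K even, continuous, C^2 away from 0, K and K' bounded *)
  (forall y : R, K (- y) = K y) ->
  continuous K ->
  (forall y : R, y != 0 -> is_derive y 1 K (dK y)) ->
  (forall y : R, y != 0 -> is_derive y 1 dK (ddK y)) ->
  (forall y : R, y != 0 -> {for y, continuous ddK}) ->
  (exists M, forall y, `|K y| <= M) ->
  (exists M, forall y, y != 0 -> `|dK y| <= M) ->
  (* L > 0, N >= 1 *)
  0 < L -> (0 < N)%N ->
  (* initial datum rho0 in L^oo(T_L), rho0 >= 0, of mass c_L <= 1 *)
  measurable_fun setT rho0 ->
  (forall y, 0 <= rho0 y) ->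
  (forall y, rho0 (y + L) = rho0 y) ->
  (exists M : R, \forall y \ae lebesgue_measure, `|rho0 y| <= M) ->
  (\int[lebesgue_measure]_(y in `[(- (L / 2))%R, (L / 2)%R[) (rho0 y)%:E = c%:E)%E ->
  c <= 1 ->
  (* the particle system, solved on [0, t] *)
  0 <= t ->
  (forall k, (k < N)%N -> x k 0 = init_pos rho0 c N L k) ->
  (forall k, (k < N)%N -> {within `[0, t], continuous (x k)}) ->
  (forall k, (k < N)%N -> forall s, 0 < s < t ->
     is_derive s 1 (x k) (velocity dK phi c N L x k s)) ->
  (* well-definedness: x_0(s) < ... < x_{N-1}(s) < x_N(s) = x_0(s) + L *)
  (forall s, 0 <= s <= t -> forall k, (k.+1 < N)%N -> x k s < x k.+1 s) ->
  (forall s, 0 <= s <= t -> x N.-1 s < x 0%N s + L) ->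
  (LinfT L (fun y => phi (rhoNL c N L (fun j => x j t) y))
   <= ((phi (c / L) + 1)
       + N%:R * \sum_(k < N) `|phi (rhok c N L (fun j => x j t) k.+1)
                              - phi (rhok c N L (fun j => x j t) k)| ^+ 2)%:E)%E.
Proof.
move=> _ phi_inc phi_ge0 phi0 _ _ _ _ _ _ _ L0 N0 _ rho0_ge0 _ _ hint _ t0
  _ _ _ hinc hlast.
have htt : 0 <= t <= t by rewrite t0 lexx.
set xs := fun j => x j t.
have hinc' : forall k, (k.+1 < N)%N -> xs k < xs k.+1 by exact: hinc.
have hlast' : xs N.-1 < xs 0%N + L by exact: hlast.
have hstep := xext_step N0 hinc' hlast'.
have hmono := xext_mono hstep.
have c0 : 0 <= c.
  have : (0 <= c%:E)%E.
    rewrite -hint; apply: integral_ge0 => y _; rewrite lee_fin; exact: rho0_ge0.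
  by rewrite lee_fin.
have phi_le : forall a b, 0 <= a -> a <= b -> phi a <= phi b.
  move=> a b a0 ab; have [->|ab'] := eqVneq a b; first exact: lexx.
  apply/ltW/phi_inc; rewrite ?in_itv /= ?a0 ?(le_trans a0 ab) //.
  by rewrite lt_neqAle ab' ab.
set h := fun k => xext N L xs k.+1 - xext N L xs k.
have h0 : forall k, (k < N)%N -> 0 < h k.
  by move=> k hk; rewrite /h subr_gt0; apply: hstep.
have rhoE : forall k, rhok c N L xs k = c / (N%:R * h (k %% N)%N) by [].
have Npos : 0 < N%:R :> R by rewrite ltr0n.
have rho_ge0 : forall k, 0 <= rhok c N L xs k.
  move=> k; rewrite rhoE; apply: divr_ge0 => //; apply: mulr_ge0; first exact: ltW.
  by apply/ltW/h0; rewrite ltn_mod.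
set P := fun k => phi (rhok c N L xs k).
set d := fun k => P k.+1 - P k.
set T := \sum_(k < N) `|d k|.
set S := \sum_(k < N) `|d k| ^+ 2.
have P_ge0 : forall k, 0 <= P k by move=> k; apply: phi_ge0.
have hsum : \sum_(k < N) h k = L.
  rewrite -(big_mkord xpredT h) telescope_sumr // xext_N //.
  by rewrite xext_small // addrAC subrr add0r.
have [m hm] : exists m : 'I_N, L <= N%:R * h m.
  case: (boolP [exists m : 'I_N, L <= N%:R * h m]) => [/existsP //|/existsPn hn].
  exfalso.
  have : \sum_(k < N) N%:R * h k < \sum_(k < N) L.
    apply: ltr_sum; first by apply/hasP; exists (Ordinal N0) => //; rewrite mem_index_enum.
    by move=> k _; rewrite ltNge; apply: hn.
  by rewrite -mulr_sumr hsum sumr_const card_ord mulr_natl ltxx.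
have Pm : P m <= phi (c / L).
  apply: phi_le; first exact: rho_ge0.
  rewrite rhoE modn_small //.
  have hm0 : 0 < N%:R * h m by apply: mulr_gt0 => //; apply: h0.
  have -> : c / (N%:R * h m) = (c / L) * (L / (N%:R * h m)).
    by field; rewrite (lt0r_neq0 (h0 _ (ltn_ord m))) (lt0r_neq0 Npos) (lt0r_neq0 L0).
  have q1 : L / (N%:R * h m) <= 1 by rewrite ler_pdivrMr // mul1r.
  have q0 : 0 <= L / (N%:R * h m) by apply: divr_ge0; apply: ltW.
  have cL : 0 <= c / L by apply: divr_ge0 => //; apply: ltW.
  nra.
have PT : forall j, (j <= N)%N -> `|P j - P 0%N| <= T.
  move=> j hj; rewrite -(telescope_sumr (fun k => P k)) //.
  apply: (le_trans (ler_norm_sum _ _ _)).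
  rewrite /T -(big_mkord xpredT (fun k => `|d k|)) (big_cat_nat _ hj) //=.
  by rewrite lerDl; apply: sumr_ge0 => k _.
have T2 : 2 * T <= 1 + N%:R * S.
  have -> : 1 + N%:R * S = \sum_(k < N) (N%:R^-1 + N%:R * `|d k| ^+ 2).
    rewrite big_split /= sumr_const card_ord -(mulr_natl (N%:R^-1) N) mulfV ?lt0r_neq0 //.
    by rewrite /S mulr_sumr.
  rewrite /T mulr_sumr; apply: ler_sum => k _.
  set a := `|d k|.
  have a0 : 0 <= a by apply: normr_ge0.
  have -> : N%:R^-1 + N%:R * a ^+ 2 = 2 * a + (N%:R * a - 1) ^+ 2 / N%:R.
    by field; apply: lt0r_neq0.
  rewrite lerDl; apply: divr_ge0; [exact: sqr_ge0 | exact: ltW].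
have S0 : 0 <= S by apply: sumr_ge0 => k _; apply: sqr_ge0.
have bnd : forall i, (i < N)%N -> P i <= phi (c / L) + 1 + N%:R * S.
  move=> i hi.
  have h1 := PT i (ltnW hi).
  have h2 := PT m (ltnW (ltn_ord m)).
  have e1 := ler_norm (P i - P 0%N).
  have e2 := ler_norm (- (P m - P 0%N)).
  rewrite normrN in e2.
  lra.
have bnd0 : 0 <= phi (c / L) + 1 + N%:R * S.
  have : 0 <= phi (c / L) by apply: phi_ge0; apply: divr_ge0 => //; apply: ltW.
  have : 0 <= N%:R * S by apply: mulr_ge0 => //; apply: ltW.
  lra.
rewrite /LinfT; apply/ess_supP; apply: nearW => y /=; rewrite lee_fin.
rewrite /rhoNL; set y' := rep L (xs 0%N) y.
set ind := fun k => (xext N L xs k <= y') && (y' < xext N L xs k.+1).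
case: (boolP [exists i : 'I_N, ind i]) => [/existsP [i hi]|/existsPn hn].
  rewrite (bigD1 i) //= -/(ind i) hi mulr1 big1 ?addr0.
    by rewrite ger0_norm ?P_ge0 //; apply: bnd.
  move=> j hji; rewrite -/(ind j).
  suff -> : ind j = false by rewrite mulr0.
  apply/negbTE/negP => hj; move: hi hj; rewrite /ind.
  move=> /andP [hi1 hi2] /andP [hj1 hj2].
  case: (ltngtP i j) => [ij|ji|ij]; last by move: hji; rewrite (val_inj ij) eqxx.
    have := hmono (j - i.+1)%N i.+1; rewrite subnKC // => /(_ (ltnW (ltn_ord j))).
    lra.
  have := hmono (i - j.+1)%N j.+1; rewrite subnKC // => /(_ (ltnW (ltn_ord i))).
  lra.
rewrite big1 ?phi0 ?normr0 //.
by move=> k _; rewrite -/(ind k) (negbTE (hn k)) mulr0.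
Qed.
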